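(* Let $M$ be a modular lattice of finite length. Then $S^\delta(M)=\{a\in M: a^{+*}=a\}$, and the maps $x\mapsto x^*$ from $S(M)$ to $S^\delta(M)$ and $a\mapsto a^+$ from $S^\delta(M)$ to $S(M)$ are mutually inverse order isomorphisms (with both sets ordered as in $M$); in particular $S(M)$ and $S^\delta(M)$ are isomorphic lattices.
   Context: $M$ is a modular lattice of finite length (every chain finite) with least element $0$ and greatest element $1$. For $a\in M$: $a^*$ is the join of all elements covering $a$ if $a<1$, and $1^*=1$; $a^+$ is the meet of all elements covered by $a$ if $a>0$, and $0^+=0$; $a^{+*}=(a^+)^*$. An interval $[a,b]$ is \emph{atomistic} if every element of it is a join of atoms of $[a,b]$ (elements covering $a$). The \emph{skeleton} $S(M)$ is the set of least elements of the maximal (under inclusion) atomistic intervals of $M$; the \emph{dual skeleton} $S^\delta(M)$ is the set of greatest elements of the maximal atomistic intervals of $M$. *)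

(* Defs.v *)
From mathcomp Require Import all_boot all_order.
From Stdlib Require Import ClassicalEpsilon.
Set Implicit Arguments. Unset Strict Implicit. Unset Printing Implicit Defensive.
Import Order.TTheory.
Local Open Scope order_scope.

Section LatticeDefs.
Context {disp : Order.disp_t} {T : tbLatticeType disp}.

Definition modular_lattice : Prop :=
  forall a b c : T, a <= c -> a `|` (b `&` c) = (a `|` b) `&` c.

Definition is_chain (C : T -> Prop) : Prop :=
  forall x y, C x -> C y -> (x <= y) || (y <= x).

Definition finite_length : Prop :=
  forall C : T -> Prop, is_chain C -> exists s : seq T, forall x, C x -> x \in s.

Definition covers (a b : T) : Prop :=
  a < b /\ forall c, a <= c -> c <= b -> c = a \/ c = b.

Definition is_sup (P : T -> Prop) (s : T) : Prop :=
  (forall x, P x -> x <= s) /\ (forall u, (forall x, P x -> x <= u) -> s <= u).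
Definition is_inf (P : T -> Prop) (s : T) : Prop :=
  (forall x, P x -> s <= x) /\ (forall u, (forall x, P x -> u <= x) -> u <= s).

(* a^* : join of all covers of a (a < 1); 1^* = 1.
   (The join exists in a lattice of finite length; it is chosen by epsilon.) *)
Definition star (a : T) : T :=
  if a == \top then \top
  else epsilon (inhabits \top) (is_sup (covers a)).

(* a^+ : meet of all elements covered by a (a > 0); 0^+ = 0. *)
Definition plus (a : T) : T :=
  if a == \bot then \bot
  else epsilon (inhabits \bot) (is_inf (fun b => covers b a)).

(* [a,b] is atomistic: every element x of [a,b] is the join (in [a,b]) of a
   set S of atoms of [a,b] (elements covering a); the empty join is a. *)
Definition atomistic_interval (a b : T) : Prop :=
  a <= b /\
  forall x, a <= x -> x <= b ->
    exists S : T -> Prop,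
      (forall y, S y -> covers a y /\ y <= b) /\
      is_sup (fun y => y = a \/ S y) x.

Definition max_atomistic (a b : T) : Prop :=
  atomistic_interval a b /\
  forall c d, atomistic_interval c d -> c <= a -> b <= d -> c = a /\ d = b.

Definition skeleton (x : T) : Prop := exists b, max_atomistic x b.
Definition dual_skeleton (a : T) : Prop := exists c, max_atomistic c a.

Definition is_sublattice_order (P : T -> Prop) : Prop :=
  forall x y, P x -> P y ->
    (exists j, P j /\ x <= j /\ y <= j /\ forall u, P u -> x <= u -> y <= u -> j <= u) /\
    (exists m, P m /\ m <= x /\ m <= y /\ forall u, P u -> u <= x -> u <= y -> u <= m).

End LatticeDefs.

(* Main.v *)
Require Import Defs.
From mathcomp Require Import all_boot all_order.
From Stdlib Require Import ClassicalEpsilon Classical.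
Import Order.TTheory.
Local Open Scope order_scope.

Section Gen.
Context {disp : Order.disp_t} {T : tbLatticeType disp}.
Hypothesis hm : @modular_lattice disp T.
Hypothesis hf : @finite_length disp T.

Lemma chain_inj_false (f : nat -> T) :
  injective f -> is_chain (fun x => exists n, x = f n) -> False.
Proof.
move=> fi ch; have [s hs] := hf _ ch.
have sub : {subset map f (iota 0 (size s).+1) <= s}.
  by move=> x /mapP [n _ ->]; apply: hs; exists n.
have U : uniq (map f (iota 0 (size s).+1)) by rewrite (map_inj_uniq fi) iota_uniq.
have := uniq_leq_size U sub.
by rewrite size_map size_iota ltnn.
Qed.

Lemma mono_false (f : nat -> T) (r : T -> T -> bool) :
  (forall x y, r x y -> (x < y) ) \/ (forall x y, r x y -> (y < x)) ->
  (forall x y z, r x y -> r y z -> r x z) ->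
  (forall n, r (f n) (f n.+1)) -> False.
Proof.
move=> hr tr hn.
have gen m k : r (f m) (f (k.+1 + m)).
  elim: k => [|k IH]; first exact: hn.
  by apply: tr IH _; rewrite addSn; apply: hn.
have gen' m n : (m < n)%N -> r (f m) (f n).
  by move=> lt; have := gen m (n - m).-1; rewrite prednK ?subn_gt0 // subnK ?(ltnW lt).
apply: (chain_inj_false f).
- move=> m n e; apply/eqP; case: (ltngtP m n) => // lt; exfalso.
  + have := gen' _ _ lt; rewrite e => h; case: hr => H; have := H _ _ h; by rewrite ltxx.
  + have := gen' _ _ lt; rewrite e => h; case: hr => H; have := H _ _ h; by rewrite ltxx.
- move=> x y [m ->] [n ->]; case: (leqP m n) => lt.
  + rewrite leq_eqVlt in lt; case/orP: lt => [/eqP -> | lt]; first by rewrite lexx.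
    case: hr => H; have := H _ _ (gen' _ _ lt) => /ltW ->; by rewrite ?orbT.
  + case: hr => H; have := H _ _ (gen' _ _ lt) => /ltW ->; by rewrite ?orbT.
Qed.

Lemma exists_max (P : T -> Prop) x0 : P x0 ->
  exists m, P m /\ forall y, P y -> m <= y -> y = m.
Proof.
move=> P0; apply: NNPP => H.
have step : forall m, P m -> exists y, P y /\ m < y.
  move=> m Pm; apply: NNPP => H2; apply: H; exists m; split => // y Py my.
  apply: NNPP => ne; apply: H2; exists y; split => //.
  by rewrite lt_def my andbT; apply/eqP => e; apply: ne.
pose next m := epsilon (inhabits m) (fun y => P y /\ m < y).
have hn m : P m -> P (next m) /\ m < next m.
  by move=> Pm; apply: (epsilon_spec (inhabits m) _ (step m Pm)).
pose f n := iter n next x0.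
have hP n : P (f n) by elim: n => //= n IH; exact: (hn _ IH).1.
apply: (@mono_false f (fun x y => x < y)).
- by left.
- by move=> x y z; apply: lt_trans.
- by move=> n; exact: (hn _ (hP n)).2.
Qed.

Lemma exists_min (P : T -> Prop) x0 : P x0 ->
  exists m, P m /\ forall y, P y -> y <= m -> y = m.
Proof.
move=> P0; apply: NNPP => H.
have step : forall m, P m -> exists y, P y /\ y < m.
  move=> m Pm; apply: NNPP => H2; apply: H; exists m; split => // y Py my.
  apply: NNPP => ne; apply: H2; exists y; split => //.
  by rewrite lt_def my andbT; apply/eqP => e; apply: ne.
pose next m := epsilon (inhabits m) (fun y => P y /\ y < m).
have hn m : P m -> P (next m) /\ next m < m.
  by move=> Pm; apply: (epsilon_spec (inhabits m) _ (step m Pm)).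
pose f n := iter n next x0.
have hP n : P (f n) by elim: n => //= n IH; exact: (hn _ IH).1.
apply: (@mono_false f (fun x y => y < x)).
- by right.
- by move=> x y z h1 h2; apply: lt_trans h2 h1.
- by move=> n; exact: (hn _ (hP n)).2.
Qed.


Lemma exists_sup (P : T -> Prop) : exists s, is_sup P s.
Proof.
pose fj (l : seq T) := foldr (fun x acc => x `|` acc) \bot l.
pose Q z := exists l : seq T, (forall x, x \in l -> P x) /\ z = fj l.
have Q0 : Q \bot by exists [::].
have [m [[l [hl ->]] mx]] := exists_max _ _ Q0.
exists (fj l); split.
- move=> x Px.
  have e : x `|` fj l = fj l.
    apply: mx; last exact: leUr.
    exists (x :: l); split => // y; rewrite inE => /orP [/eqP -> // | /hl //].
  by rewrite -e leUl.
- move=> u hu; elim: l hl {mx} => [|y l IH] hl /=; first exact: le0x.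
  have Py : P y by apply: hl; rewrite mem_head.
  have hl' : forall x, x \in l -> P x by move=> z hz; apply: hl; rewrite inE hz orbT.
  by rewrite leUx hu // IH.
Qed.

Lemma exists_inf (P : T -> Prop) : exists s, is_inf P s.
Proof.
have [s [h1 h2]] := exists_sup (fun u => forall x, P x -> u <= x).
exists s; split.
- move=> x Px; apply: h2 => u hu; exact: hu.
- move=> u hu; exact: h1.
Qed.

Lemma sup_uniq (P : T -> Prop) (s1 s2 : T) : is_sup P s1 -> is_sup P s2 -> s1 = s2.
Proof.
move=> [a1 b1] [a2 b2]; apply/le_anti; rewrite b1 ?b2 //.
Qed.

Lemma inf_uniq (P : T -> Prop) (s1 s2 : T) : is_inf P s1 -> is_inf P s2 -> s1 = s2.
Proof.
move=> [a1 b1] [a2 b2]; apply/le_anti; rewrite b1 ?b2 //.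
Qed.

Lemma star_top : star (\top : T) = \top.
Proof. by rewrite /star eqxx. Qed.

Lemma plus_bot : plus (\bot : T) = \bot.
Proof. by rewrite /plus eqxx. Qed.

Lemma star_sup (a : T) : a != \top -> is_sup (covers a) (star a).
Proof.
move=> ne; rewrite /star (negbTE ne); apply: epsilon_spec; exact: exists_sup.
Qed.

Lemma plus_inf (a : T) : a != \bot -> is_inf (fun b => covers b a) (plus a).
Proof.
move=> ne; rewrite /plus (negbTE ne); apply: epsilon_spec; exact: exists_inf.
Qed.

Lemma exists_cover (a : T) : a != \top -> exists p, covers a p.
Proof.
move=> ne; have P0 : a < \top by rewrite lt_neqAle ne lex1.
have [m [am mn]] := exists_min (fun y => a < y) _ P0.
exists m; split => // c ac cm.
case: (eqVneq c a) => [->|nca]; [by left | right].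
apply: mn => //; by rewrite lt_def nca ac.
Qed.

Lemma exists_lcover (b : T) : b != \bot -> exists c, covers c b.
Proof.
move=> ne; have P0 : \bot < b by rewrite lt_def ne le0x.
have [m [mb mx]] := exists_max (fun y => y < b) _ P0.
exists m; split => // c mc cb.
case: (eqVneq c b) => [->|ncb]; [by right | left].
apply: mx => //; by rewrite lt_def eq_sym ncb cb.
Qed.

Lemma le_star (a : T) : a <= star a.
Proof.
case: (eqVneq a \top) => [->|ne]; first by rewrite star_top.
have [p hp] := exists_cover _ ne.
apply: (le_trans (ltW (proj1 hp))); exact: (proj1 (star_sup _ ne) _ hp).
Qed.

Lemma plus_le (b : T) : plus b <= b.
Proof.
case: (eqVneq b \bot) => [->|ne]; first by rewrite plus_bot.
have [c hc] := exists_lcover _ ne.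
apply: (le_trans ((plus_inf _ ne).1 _ hc)); exact: ltW (proj1 hc).
Qed.

Lemma up_cover (p y : T) : covers (p `&` y) p -> covers y (p `|` y).
Proof.
move=> [lt hc]; split.
  rewrite lt_def leUr andbT; apply/negP => /eqP e.
  have py : p <= y by rewrite -e leUl.
  by move: lt; rewrite (elimT meet_idPl py) ltxx.
move=> c yc cpy.
have h1 : p `&` y <= p `&` c by rewrite lexI leIl andTb (le_trans (leIr _ _) yc).
have mod := hm _ p _ yc.
rewrite (joinC y p) (elimT meet_idPr cpy) in mod.
case: (hc _ h1 (leIl _ _)) => e; [left | right].
- by rewrite -mod e meetKUC.
- by rewrite -mod e joinC.
Qed.

Lemma low_cover (v q : T) : covers q (v `|` q) -> covers (v `&` q) v.
Proof.
move=> [lt hc]; split.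
  rewrite lt_def leIl andbT; apply/negP => /eqP e.
  have vq : v <= q by rewrite e leIr.
  by move: lt; rewrite (elimT join_idPr vq) ltxx.
move=> c vc cv.
have h1 : q <= c `|` q by exact: leUr.
have h2 : c `|` q <= v `|` q by rewrite leUx leUr andbT (le_trans cv (leUl _ _)).
case: (hc _ h1 h2) => e; [left | right].
- apply/le_anti; rewrite vc andbT lexI cv /=.
  by rewrite -e leUl.
- have mod := hm _ q _ cv.
  rewrite meetC in vc; rewrite (elimT join_idPl vc) in mod.
  by rewrite mod e joinIKC.
Qed.


Lemma star_atomistic (x : T) : atomistic_interval x (star x).
Proof.
case: (eqVneq x \top) => [->|ne].
  rewrite star_top; split => // y h1 h2.
  have ey : y = \top by apply/le_anti; rewrite h1 lex1.
  exists (fun _ => False); split => //; split.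
  - by move=> z [->|[]]; rewrite ey.
  - by move=> u hu; rewrite ey; apply: hu; left.
have [bsup bleast] := star_sup _ ne.
split; first exact: le_star.
move=> y xy yb.
pose S := fun p => covers x p /\ p <= y.
exists S; split.
  by move=> p [hp py]; split => //; exact: (le_trans py yb).
have [z [zup zleast]] := exists_sup (fun w => w = x \/ S w).
suff yz : y <= z.
  split.
  - by move=> w [->|[_ wy]].
  - by move=> u hu; apply: (le_trans yz (zleast _ hu)).
have xz : x <= z by apply: zup; left.
have [q [[xq [qb qy]] qmax]] := exists_max
  (fun q => x <= q /\ q <= star x /\ q `&` y = x) x
  (conj (lexx x) (conj (le_star x) (elimT meet_idPl xy))).
have allr : forall r, covers x r -> r <= q `|` z.
  move=> r hr; case: (boolP (r <= q `|` z)) => // nrqz; exfalso.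
  have nrq : ~~ (r <= q) by apply: contra nrqz => rq; apply: (le_trans rq (leUl _ _)).
  have rb : r <= star x := bsup _ hr.
  have rqx : r `&` q = x.
    have [lt hc] := hr.
    have h1 : x <= r `&` q by rewrite lexI (ltW lt) xq.
    case: (hc _ h1 (leIl _ _)) => [//|e]; exfalso.
    have : r <= q by rewrite -e leIr.
    by rewrite (negbTE nrq).
  have cq : covers q (r `|` q) by apply: up_cover; rewrite rqx.
  set v := (r `|` q) `&` y.
  have qv1 : q <= q `|` v := leUl _ _.
  have qv2 : q `|` v <= r `|` q by rewrite leUx leUr leIl.
  have xv : x <= v by rewrite lexI (le_trans xq (leUr _ _)) xy.
  case: (proj2 cq _ qv1 qv2) => e.
  + have vq : v <= q by rewrite -[X in _ <= X]e leUr.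
    have vx : v = x.
      apply/le_anti; rewrite xv andbT -qy lexI vq leIr //.
    have rqb : r `|` q <= star x by rewrite leUx rb qb.
    have e2 := qmax (r `|` q) (conj (le_trans xq (leUr _ _)) (conj rqb vx)) (leUr _ _).
    by move: nrq; rewrite -e2 leUl.
  + have vqx : v `&` q = x.
      apply/le_anti; rewrite lexI xv xq andbT.
      by rewrite -qy lexI (le_trans (leIl _ _) (leIr _ _)) leIr.
    have cv : covers x v by rewrite -vqx; apply: low_cover; rewrite (joinC v q) e.
    have vz : v <= z by apply: zup; right; split => //; exact: leIr.
    apply: (negP nrqz); apply: (le_trans (leUl r q)); rewrite -e.
    by rewrite leUx leUl (le_trans vz (leUr _ _)).
have bqz : star x <= q `|` z by apply: bleast => r hr; exact: allr.
have zy : z <= y by apply: zleast => w [->|[_ wy]].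
have mod := hm _ q _ zy.
rewrite qy (elimT join_idPl xz) in mod.
rewrite mod (joinC z q) lexI lexx andbT.
exact: (le_trans yb bqz).
Qed.


Lemma atomistic_le_star (a b : T) : atomistic_interval a b -> b <= star a.
Proof.
move=> [ab h]; case: (eqVneq a \top) => [->|ne]; first by rewrite star_top lex1.
have [S [hS [sup1 sup2]]] := h b ab (lexx b).
apply: sup2 => y [->|Sy]; first exact: le_star.
exact: (proj1 (star_sup _ ne) _ (proj1 (hS _ Sy))).
Qed.

Lemma atomistic_plus_le (a b : T) : atomistic_interval a b -> plus b <= a.
Proof.
move=> [ab h].
case: (eqVneq b \bot) => [->|ne]; first by rewrite plus_bot le0x.
have [pinf pgreat] := plus_inf _ ne.
set m := a `|` plus b.
have am : a <= m := leUl _ _.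
have mb : m <= b by rewrite leUx ab plus_le.
have [S [hS [sup1 sup2]]] := h m am mb.
case: (classic (exists p, S p)) => [[p Sp]|noS]; last first.
  have ma : m <= a.
    by apply: sup2 => y [->|Sy] //; exfalso; apply: noS; exists y.
  have pm : plus b <= m by rewrite /m leUr.
  exact: (le_trans pm ma).
exfalso.
have [cap pb] := hS _ Sp.
have pm : p <= m := sup1 _ (or_intror Sp).
have [q [[aq [qb qp]] qmax]] := exists_max
  (fun q => a <= q /\ q <= b /\ q `&` p = a) a
  (conj (lexx a) (conj ab (elimT meet_idPl (ltW (proj1 cap))))).
have pqa : p `&` q = a by rewrite meetC.
have cqp : covers q (p `|` q) by apply: up_cover; rewrite pqa.
have [S' [hS' [sb1 sb2]]] := h b ab (lexx b).
have bqp : b <= p `|` q.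
  apply: sb2 => r [->|Sr]; first exact: (le_trans aq (leUr _ _)).
  have [car rb] := hS' _ Sr.
  case: (boolP (r <= p `|` q)) => // nr; exfalso.
  have nrq : ~~ (r <= q) by apply: contra nr => rq; exact: (le_trans rq (leUr _ _)).
  have rqa : r `&` q = a.
    have [lt hc] := car.
    have h1 : a <= r `&` q by rewrite lexI (ltW lt) aq.
    case: (hc _ h1 (leIl _ _)) => [//|e]; exfalso.
    have : r <= q by rewrite -e leIr.
    by rewrite (negbTE nrq).
  have crq : covers q (r `|` q) by apply: up_cover; rewrite rqa.
  have rqb : r `|` q <= b by rewrite leUx rb qb.
  have aq' : a <= (r `|` q) `&` p by rewrite lexI (le_trans aq (leUr _ _)) (ltW (proj1 cap)).
  case: (proj2 cap _ aq' (leIr _ _)) => e.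
  + have e2 := qmax (r `|` q) (conj (le_trans aq (leUr _ _)) (conj rqb e)) (leUr _ _).
    by move: nrq; rewrite -e2 leUl.
  + have prq : p <= r `|` q by rewrite -e leIl.
    have pq2 : p `|` q <= r `|` q by rewrite leUx prq leUr.
    case: (proj2 crq _ (leUr _ _) pq2) => e3.
    * have pq : p <= q by rewrite -e3 leUl.
      by move: (proj1 cap); rewrite -qp (elimT meet_idPr pq) ltxx.
    * by move: nr; rewrite e3 leUl.
have ebq : p `|` q = b by apply/le_anti; rewrite bqp andbT leUx pb qb.
have cqb : covers q b by rewrite -ebq.
have pbq : plus b <= q := pinf _ cqb.
have mq : m <= q by rewrite leUx aq pbq.
have pq : p <= q := le_trans pm mq.
by move: (proj1 cap); rewrite -qp (elimT meet_idPr pq) ltxx.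
Qed.

Lemma plus_star_le (x : T) : plus (star x) <= x.
Proof. exact: atomistic_plus_le (star_atomistic x). Qed.

Lemma star_mono (x y : T) : x <= y -> star x <= star y.
Proof.
move=> xy; case: (eqVneq y \top) => [->|ney]; first by rewrite star_top lex1.
case: (eqVneq x \top) => [ex|nex].
  by exfalso; move/eqP: ney; apply; apply/le_anti; rewrite lex1 -ex xy.
apply: (proj2 (star_sup _ nex)) => p hp.
case: (boolP (p <= y)) => py; first exact: (le_trans py (le_star y)).
have pyx : p `&` y = x.
  have [lt hc] := hp.
  have h1 : x <= p `&` y by rewrite lexI (ltW lt) xy.
  case: (hc _ h1 (leIl _ _)) => [//|e]; exfalso.
  have : p <= y by rewrite -e leIr.
  by rewrite (negbTE py).
have cy : covers y (p `|` y) by apply: up_cover; rewrite pyx.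
apply: (le_trans (leUl p y)); exact: (proj1 (star_sup _ ney) _ cy).
Qed.

End Gen.

Section Dual.
Context {disp : Order.disp_t} {T : tbLatticeType disp}.

Lemma modular_dual_aux (hm : @modular_lattice disp T) (a b c : T) :
  c <= a -> a `&` (b `|` c) = (a `&` b) `|` c.
Proof.
move=> ca; have e := hm c b a ca.
by rewrite (joinC b c) (meetC a (c `|` b)) -e joinC (meetC b a).
Qed.

Lemma modular_dual : @modular_lattice disp T -> @modular_lattice _ T^d.
Proof.
move=> hm a b c ca; exact: (modular_dual_aux hm a b c ca).
Qed.

Lemma finite_dual : @finite_length disp T -> @finite_length _ T^d.
Proof.
move=> hf C ch; apply: hf => x y Cx Cy.
by case/orP: (ch x y Cx Cy) => h; apply/orP; [right|left].
Qed.

Lemma covers_dual (x y : T) : @covers _ T^d x y <-> covers y x.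
Proof.
split.
- move=> [lt hc]; split => // c h1 h2.
  by case: (hc c h2 h1) => e; [right|left].
- move=> [lt hc]; split => // c h1 h2.
  by case: (hc c h2 h1) => e; [right|left].
Qed.

Lemma star_dual : @finite_length disp T -> forall x : T, @star _ T^d x = plus x.
Proof.
move=> hf x; case: (eqVneq x \bot) => [->|ne].
  by rewrite plus_bot; exact: (@star_top _ T^d).
have h1 := @star_sup _ T^d (finite_dual hf) x ne.
have h2 := plus_inf hf x ne.
have h1' : is_inf (T:=T) (fun b => covers b x) (@star _ T^d x).
  split.
  - by move=> z hz; apply: (proj1 h1); apply/covers_dual.
  - by move=> u hu; apply: (proj2 h1) => z hz; apply: hu; apply/covers_dual.
exact (inf_uniq _ _ _ h1' h2).
Qed.

Lemma plus_dual : @finite_length disp T -> forall x : T, @plus _ T^d x = star x.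
Proof.
move=> hf x; case: (eqVneq x \top) => [->|ne].
  by rewrite star_top; exact: (@plus_bot _ T^d).
have h1 := @plus_inf _ T^d (finite_dual hf) x ne.
have h2 := star_sup hf x ne.
have h1' : is_sup (T:=T) (covers x) (@plus _ T^d x).
  split.
  - by move=> z hz; apply: (proj1 h1); apply/covers_dual.
  - by move=> u hu; apply: (proj2 h1) => z hz; apply: hu; apply/covers_dual.
exact (sup_uniq _ _ _ h1' h2).
Qed.

End Dual.

Section Main.
Context {disp : Order.disp_t} {T : tbLatticeType disp}.
Hypothesis hm : @modular_lattice disp T.
Hypothesis hf : @finite_length disp T.

Lemma plus_mono (x y : T) : x <= y -> plus x <= plus y.
Proof.
move=> xy.
have := @star_mono _ T^d (modular_dual hm) (finite_dual hf) y x xy.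
by rewrite !(star_dual hf).
Qed.

Lemma le_star_plus (b : T) : b <= star (plus b).
Proof.
have := @plus_star_le _ T^d (modular_dual hm) (finite_dual hf) b.
by rewrite (star_dual hf) (plus_dual hf).
Qed.

Lemma max_at_iff (a b : T) : max_atomistic a b <-> b = star a /\ a = plus b.
Proof.
split.
- move=> [hat mx].
  have bs := atomistic_le_star hf _ _ hat.
  have [_ e1] := mx a (star a) (star_atomistic hm hf a) (lexx a) bs.
  have pa := atomistic_plus_le hm hf _ _ hat.
  have [e2 _] := mx (plus b) (star (plus b)) (star_atomistic hm hf _) pa (le_star_plus b).
  by split.
- move=> [eb ea]; split; first by rewrite eb; exact: star_atomistic.
  move=> c d atcd ca bd.
  have dsc := atomistic_le_star hf _ _ atcd.
  have db : d <= b by rewrite eb; exact: (le_trans dsc (star_mono hm hf _ _ ca)).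
  have ed : d = b by apply/le_anti; rewrite db bd.
  have pdc := atomistic_plus_le hm hf _ _ atcd.
  rewrite ed -ea in pdc.
  by split => //; apply/le_anti; rewrite ca pdc.
Qed.

Lemma skel_iff (x : T) : skeleton x <-> plus (star x) = x.
Proof.
split.
- by move=> [b /max_at_iff [-> e]].
- by move=> e; exists (star x); apply/max_at_iff.
Qed.

Lemma dskel_iff (a : T) : dual_skeleton a <-> star (plus a) = a.
Proof.
split.
- by move=> [c /max_at_iff [e1 e2]]; rewrite -e2 -e1.
- by move=> e; exists (plus a); apply/max_at_iff.
Qed.

Lemma star_plus_star (w : T) : star (plus (star w)) = star w.
Proof.
apply/le_anti; rewrite le_star_plus andbT.
exact: star_mono hm hf _ _ (plus_star_le hm hf w).
Qed.

Lemma plus_star_plus (w : T) : plus (star (plus w)) = plus w.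
Proof.
apply/le_anti; rewrite plus_star_le // andTb.
exact: plus_mono _ _ (le_star_plus w).
Qed.

End Main.

Theorem theorem6p4 (disp : Order.disp_t) (T : tbLatticeType disp) :
  @modular_lattice disp T -> @finite_length disp T ->
  (forall a : T, dual_skeleton a <-> star (plus a) = a) /\
  (forall x : T, skeleton x -> dual_skeleton (star x)) /\
  (forall a : T, dual_skeleton a -> skeleton (plus a)) /\
  (forall x : T, skeleton x -> plus (star x) = x) /\
  (forall a : T, dual_skeleton a -> star (plus a) = a) /\
  (forall x y : T, skeleton x -> skeleton y -> x <= y -> star x <= star y) /\
  (forall a b : T, dual_skeleton a -> dual_skeleton b -> a <= b -> plus a <= plus b) /\
  is_sublattice_order (@skeleton disp T) /\ is_sublattice_order (@dual_skeleton disp T).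
Proof.
move=> hm hf.
split; first exact: dskel_iff.
split; first by move=> x /(skel_iff hm hf) e; apply/(dskel_iff hm hf); rewrite e.
split; first by move=> a /(dskel_iff hm hf) e; apply/(skel_iff hm hf); rewrite e.
split; first by move=> x /(skel_iff hm hf).
split; first by move=> a /(dskel_iff hm hf).
split; first by move=> x y _ _; exact: star_mono.
split; first by move=> a b _ _; exact: plus_mono.
split.
- move=> x y /(skel_iff hm hf) ex /(skel_iff hm hf) ey; split.
  + exists (x `|` y); split; last by split; [exact: leUl|split; [exact: leUr|move=> u _ xu yu; rewrite leUx xu yu]].
    apply/(skel_iff hm hf); apply/le_anti; rewrite plus_star_le // andTb.
    rewrite leUx; apply/andP; split.
    * rewrite -[X in X <= _]ex; apply: plus_mono => //; apply: star_mono => //; exact: leUl.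
    * rewrite -[X in X <= _]ey; apply: plus_mono => //; apply: star_mono => //; exact: leUr.
  + exists (plus (star (x `&` y))); split.
      by apply/(skel_iff hm hf); rewrite star_plus_star.
    split; first exact: (le_trans (plus_star_le hm hf _) (leIl _ _)).
    split; first exact: (le_trans (plus_star_le hm hf _) (leIr _ _)).
    move=> u /(skel_iff hm hf) eu ux uy; rewrite -eu.
    apply: plus_mono => //; apply: star_mono => //; by rewrite lexI ux uy.
- move=> x y /(dskel_iff hm hf) ex /(dskel_iff hm hf) ey; split.
  + exists (star (plus (x `|` y))); split.
      by apply/(dskel_iff hm hf); rewrite plus_star_plus.
    split.
      rewrite -[X in X <= _]ex; apply: star_mono => //; apply: plus_mono => //; exact: leUl.
    split.
      rewrite -[X in X <= _]ey; apply: star_mono => //; apply: plus_mono => //; exact: leUr.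
    move=> u /(dskel_iff hm hf) eu xu yu; rewrite -eu.
    apply: star_mono => //; apply: plus_mono => //; by rewrite leUx xu yu.
  + exists (x `&` y); split; last by split; [exact: leIl|split; [exact: leIr|move=> u _ ux uy; rewrite lexI ux uy]].
    apply/(dskel_iff hm hf); apply/le_anti; rewrite le_star_plus // andbT.
    rewrite lexI; apply/andP; split.
    * rewrite -[X in _ <= X]ex; apply: star_mono => //; apply: plus_mono => //; exact: leIl.
    * rewrite -[X in _ <= X]ey; apply: star_mono => //; apply: plus_mono => //; exact: leIr.
Qed.
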